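(* Suppose there is $\theta\in\mathcal I$ with $\nu(\{\overline{\boldsymbol\theta}\in\Sigma:\theta_1=\theta\})>0$ such that for every $i\in[N]$, $f_\theta^{(i)}[\mathbf 0]+\sum_{j\in[N]}f_\theta^{(i)}[\mathbf e_j]<1.$ Then the multitype branching process in random environment $(\mathbf Z_n)$ is strongly regular.
   Context: $N\ge2$, $\mathcal I$ countable, $\Sigma=\mathcal I^{\mathbb N}$, $\nu$ a shift-invariant ergodic probability measure on $\Sigma$ (the law of the environment); $[N]=\{0,\dots,N-1\}$; $\mathbf e_j$ is the $j$-th unit vector and $\mathbf 0$ the zero vector of $\mathbb N_0^N$. For $\theta\in\mathcal I$, $f_\theta^{(i)}(\mathbf s)=\sum_{\mathbf z\in\mathbb N_0^N}f_\theta^{(i)}[\mathbf z]\mathbf s^{\mathbf z}$, $i\in[N]$, are pgfs on $\mathbb N_0^N$. In environment $\overline{\boldsymbol\theta}=(\theta_1,\theta_2,\dots)$, each type-$i$ individual of generation $n-1$ independently produces an offspring vector $\mathbf y$ ($y_j$ type-$j$ children) with probability $f_{\theta_n}^{(i)}[\mathbf y]$; $\mathbf Z_n$ is the sum and $\|\mathbf Z_n\|$ the total number of individuals. The process is strongly regular if there exists $n$ such that $\nu\big(\{\overline{\boldsymbol\theta}:\min_{i\in[N]}P_{\overline{\boldsymbol\theta}}(\|\mathbf Z_n\|>1\mid\mathbf Z_0=\mathbf e_i)>0\}\big)>0$, where $P_{\overline{\boldsymbol\theta}}$ is the law of the process in the fixed environment $\overline{\boldsymbol\theta}$. *)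

(* Defs.v *)
From HB Require Import structures.
From mathcomp Require Import all_boot all_order all_algebra.
From mathcomp Require Import all_classical all_reals.
From mathcomp Require Import ereal esum measure probability.

Set Implicit Arguments.
Unset Strict Implicit.
Unset Printing Implicit Defensive.

Import Order.TTheory GRing.Theory Num.Theory.
Local Open Scope classical_set_scope.
Local Open Scope ring_scope.

Definition vec (N : nat) := {ffun 'I_N -> nat}.

Definition vadd N (x y : vec N) : vec N := [ffun k => x k + y k]%N.
Definition vzero N : vec N := [ffun _ => 0%N].
Definition unitv N (j : 'I_N) : vec N := [ffun k => nat_of_bool (k == j)].
Definition vnorm N (x : vec N) : nat := (\sum_(k < N) x k)%N.

(** cylinder generators: preimages of arbitrary subsets of the (countable,
    discrete) type space I under the coordinate maps. *)
Definition cylinders (I : Type) : set (set (nat -> I)) :=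
  [set C | exists (k : nat) (A : set I), C = (fun w : nat -> I => w k) @^-1` A].

Definition Env (I : pointedType) := g_sigma_algebraType (@cylinders I).

Definition shift (I : Type) (w : nat -> I) : nat -> I := fun k => w k.+1.

Definition shift_invariant (R : realType) (I : pointedType)
  (nu : probability (Env I) R) : Prop :=
  forall A : set (Env I), measurable A -> nu (@shift I @^-1` A) = nu A.

Definition ergodic (R : realType) (I : pointedType)
  (nu : probability (Env I) R) : Prop :=
  forall A : set (Env I), measurable A -> @shift I @^-1` A = A ->
    nu A = 0%E \/ nu A = 1%E.

(** [f theta i y] = f_theta^{(i)}[y] : probability that a type-i individual
    has offspring vector y in environment state theta. *)
Definition is_offspring_family (R : realType) (I : Type) N
  (f : I -> 'I_N -> vec N -> R) : Prop :=
  forall theta i, (forall y, 0 <= f theta i y) /\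
                  (\esum_(y in [set: vec N]) (f theta i y)%:E = 1)%E.

Definition dist (R : realType) N := vec N -> \bar R.

Definition ddirac (R : realType) N (z : vec N) : dist R N :=
  fun y => (if y == z then 1 else 0)%:E.

Definition dconv (R : realType) N (p q : dist R N) : dist R N :=
  fun y => (\esum_(ab in [set ab : vec N * vec N | vadd ab.1 ab.2 = y])
              (p ab.1 * q ab.2))%E.

(** law of the offspring vector of a population z (z_i individuals of type i,
    reproducing independently) when the environment state is theta *)
Definition pop_offspring (R : realType) (I : Type) N
  (f : I -> 'I_N -> vec N -> R) (theta : I) (z : vec N) : dist R N :=
  foldr (fun i acc => iter (z i) (dconv (fun y => (f theta i y)%:E)) acc)
        (ddirac R (vzero N)) (enum 'I_N).

(** law of Z_n in the fixed environment w = (theta_1, theta_2, ...)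
    (theta_{k+1} = w k), given Z_0 = z; generation n is produced from
    generation n-1 according to theta_n. *)
Fixpoint Zlaw (R : realType) (I : Type) N (f : I -> 'I_N -> vec N -> R)
  (w : nat -> I) (n : nat) (z : vec N) : dist R N :=
  match n with
  | 0 => ddirac R z
  | m.+1 => fun y =>
      (\esum_(x in [set: vec N]) (Zlaw f w m z x * pop_offspring f (w m) x y))%E
  end.

Definition prob_more_than_one (R : realType) (I : Type) N
  (f : I -> 'I_N -> vec N -> R) (w : nat -> I) (n : nat) (i : 'I_N) : \bar R :=
  (\esum_(y in [set y : vec N | (1 < vnorm y)%N]) Zlaw f w n (unitv i) y)%E.

Definition strongly_regular (R : realType) (I : pointedType) N
  (nu : probability (Env I) R) (f : I -> 'I_N -> vec N -> R) : Prop :=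
  exists n : nat,
    (0 < nu [set w : Env I | forall i : 'I_N, (0 < prob_more_than_one f w n i)%E])%E.

(* Main.v *)
Require Import Defs.
From HB Require Import structures.
From mathcomp Require Import all_boot all_order all_algebra.
From mathcomp Require Import all_classical all_reals.
From mathcomp Require Import ereal esum measure probability.

Set Implicit Arguments.
Unset Strict Implicit.
Import Order.TTheory GRing.Theory Num.Theory.
Local Open Scope classical_set_scope.
Local Open Scope ring_scope.

Lemma esum_ge1 (R : realType) (T : choiceType) (D : set T) (a : T -> \bar R) t :
  D t -> (a t <= \esum_(i in D) a i)%E.
Proof.
move=> Dt; apply: esum_ge; exists [set t].
  by split; [exact: finite_set1 | move=> x ->].
by rewrite fsbig_set1.
Qed.

Lemma fold_unitv (T : Type) N (i : 'I_N) (F : 'I_N -> T -> T) d (s : seq 'I_N) :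
  uniq s ->
  foldr (fun k acc => iter (unitv i k) (F k) acc) d s = if i \in s then F i d else d.
Proof.
elim: s => //= k s IH /andP[ks us]; rewrite IH // ffunE in_cons.
case: (eqVneq k i) => [eki|ki] /=.
  by subst k; rewrite (negbTE ks).
by [].

Qed.

Lemma pop_unitv (R : realType) (I : Type) N (f : I -> 'I_N -> vec N -> R) th i :
  pop_offspring f th (unitv i) = dconv (fun y => (f th i y)%:E) (ddirac R (vzero N)).
Proof.
by rewrite /pop_offspring fold_unitv ?enum_uniq // mem_enum.
Qed.

Lemma prob_ge (R : realType) (I : Type) N (f : I -> 'I_N -> vec N -> R) w i y :
  (1 < vnorm y)%N ->
  ((f (w 0%N) i y)%:E <= prob_more_than_one f w 1 i)%E.
Proof.
move=> Hy; rewrite /prob_more_than_one.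
apply: le_trans (esum_ge1 (D := [set y : vec N | (1 < vnorm y)%N]) _ Hy).
rewrite /=; apply: le_trans (esum_ge1 (t:=unitv i) _ _) => //.
rewrite /ddirac eqxx mul1e pop_unitv /dconv.
apply: le_trans (esum_ge1 (t := (y, vzero N)) _ _).
  by rewrite /= /ddirac eqxx mule1.
by rewrite /=; apply/ffunP => k; rewrite /vadd !ffunE addn0.
Qed.
Lemma esum_delta (R : realType) (T : choiceType) (z : T) (c : R) : 0 <= c ->
  (\esum_(y in [set: T]) ((if y == z then c else 0)%:E) = c%:E)%E.
Proof.
move=> c0.
rewrite (eq_esum (b := fun y => if y \in [set z] then c%:E else 0%E)); last first.
  move=> y _; case: eqP => [->|yz]; first by rewrite mem_set.
  by rewrite memNset.
by rewrite -esum_mkcond esum_set1 // lee_fin.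
Qed.

Lemma vnorm_le1 N (y : vec N) : (vnorm y <= 1)%N ->
  y = vzero N \/ exists j, y = unitv j.
Proof.
rewrite /vnorm leq_eqVlt ltnS leqn0 => /orP[/eqP H|/eqP H].
- have [j yj] : exists j, (0 < y j)%N.
    apply/existsP; apply: contraT; rewrite negb_exists => /forallP H0.
    move: H; rewrite big1 // => k _; move: (H0 k); rewrite lt0n negbK => /eqP.
    done.
  right; exists j; move: H; rewrite (bigD1 j) //= => H.
  have yj1 : y j = 1%N by move: yj H; case: (y j) => // -[|n] //.
  have H2 : (\sum_(k < N | k != j) y k = 0)%N by move: H; rewrite yj1 => -[].
  apply/ffunP => k; rewrite ffunE; case: eqP => [->//|/eqP kj].
  move/eqP: H2; rewrite sum_nat_eq0 => /forallP/(_ k); rewrite kj /= => /eqP.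
  done.
- left; apply/ffunP => k; rewrite ffunE.
  move/eqP: H; rewrite sum_nat_eq0 => /forallP/(_ k) /= /eqP; done.
Qed.

Lemma unitv_inj N (j k : 'I_N) : unitv j = unitv k -> j = k.
Proof.
move/ffunP/(_ j); rewrite !ffunE eqxx; case: eqP => // _ [] //.
Qed.

Lemma vnorm_unitv N (j : 'I_N) : vnorm (unitv j) = 1%N.
Proof.
rewrite /vnorm (bigD1 j) //= ffunE eqxx big1 // => k kj; rewrite ffunE (negbTE kj).
done.
Qed.

Lemma vnorm_vzero N : vnorm (vzero N) = 0%N.
Proof. by rewrite /vnorm big1 // => k _; rewrite ffunE. Qed.

Lemma exists_big (R : realType) N (p : vec N -> R) :
  (forall y, 0 <= p y) ->
  (\esum_(y in [set: vec N]) (p y)%:E = 1)%E ->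
  p (vzero N) + \sum_(j < N) p (unitv j) < 1 ->
  exists y, (1 < vnorm y)%N /\ 0 < p y.
Proof.
move=> p0 s1 lt1.
case: (pselect (exists y, (1 < vnorm y)%N /\ 0 < p y)) => // Hn.
have Z y : (1 < vnorm y)%N -> p y = 0.
  move=> Hy; apply/eqP; rewrite eq_le p0 andbT leNgt; apply/negP => Hp.
  by apply: Hn; exists y.
have pw y : (p y)%:E = ((if y == vzero N then p (vzero N) else 0)%:E +
   \sum_(j < N) (if y == unitv j then p (unitv j) else 0)%:E)%E.
  case: (leqP (vnorm y) 1) => Hy; last first.
    rewrite Z // big1 ?adde0; last first.
      by move=> j _; case: eqP => // yj; move: Hy; rewrite yj vnorm_unitv.
    by case: eqP => // yz; move: Hy; rewrite yz vnorm_vzero.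
  case: (vnorm_le1 Hy) => [->|[j ->]].
    rewrite eqxx big1 ?adde0 // => j _; case: eqP => // H.
    by move: (vnorm_unitv j); rewrite -H vnorm_vzero.
  have -> : (unitv j == vzero N) = false.
    by apply/negP => /eqP H; move: (vnorm_unitv j); rewrite H vnorm_vzero.
  rewrite add0e (bigD1 j) //= eqxx big1 ?adde0 // => k kj.
  case: eqP => // /unitv_inj H; by rewrite H eqxx in kj.
move: s1; rewrite (eq_esum (fun y _ => pw y)) esumD; last 2 first.
- by move=> y _; case: ifP; rewrite lee_fin.
- by move=> y _; apply: sume_ge0 => j _; case: ifP; rewrite lee_fin.
rewrite esum_sum; last by move=> y j _ _; case: ifP; rewrite lee_fin.
rewrite esum_delta //.
under eq_bigr do rewrite esum_delta //.
rewrite sumEFin -EFinD => /eqP; rewrite eqe => /eqP H.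
by move: lt1; rewrite H ltxx.
Qed.

Lemma cyl_meas (I : pointedType) (A : set I) :
  measurable ((fun w : Env I => w 0%N) @^-1` A).
Proof. by apply: sub_gen_smallest; exists 0%N, A. Qed.

Theorem fact4p7 (R : realType) (N : nat) (I : pointedType)
  (nu : probability (Env I) R) (f : I -> 'I_N -> vec N -> R) :
  (2 <= N)%N ->
  countable [set: I] ->
  shift_invariant nu ->
  ergodic nu ->
  is_offspring_family f ->
  (exists theta : I,
      (0 < nu [set w : Env I | w 0%N = theta])%E /\
      (forall i : 'I_N,
          f theta i (vzero N) + \sum_(j < N) f theta i (unitv j) < 1)) ->
  strongly_regular nu f.
Proof.
move=> _ _ _ _ hf [th [pos hlt]]; exists 1%N.
have big i : exists y, (1 < vnorm y)%N /\ 0 < f th i y.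
  by apply: exists_big (hlt i) => [y|]; [case: (hf th i) => /(_ y) | case: (hf th i)].
refine (lt_le_trans pos _).
have -> : [set w : Env I | forall i : 'I_N, (0 < prob_more_than_one f w 1 i)%E] =
   (fun w : Env I => w 0%N) @^-1`
   [set t | forall i : 'I_N, (0 < prob_more_than_one f (fun _ => t) 1 i)%E].
  by [].
have -> : [set w : Env I | w 0%N = th] = (fun w : Env I => w 0%N) @^-1` [set th].
  by [].
apply: le_measure; rewrite ?inE; try exact: cyl_meas.
move=> w /= -> i; case: (big i) => y [Hy Hp].
apply: lt_le_trans (prob_ge f (fun _ => th) i Hy).
by rewrite lte_fin.
Qed.
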